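(* Let $G$ be a finite abstract simplicial complex. Then $$\sum_{x \in G} w(x)\, w(U(x)) = w(G).$$
   Context: A finite abstract simplicial complex $G$ is a finite set of non-empty finite sets such that every non-empty subset of an element of $G$ is again in $G$. For $x \in G$, $\dim(x)=|x|-1$ and $w(x)=(-1)^{\dim(x)}$. For a subset $A\subset G$, $w(A)=\sum_{x\in A} w(x)$ (the Euler characteristic of $A$), and in particular $w(G)=\sum_{x\in G}w(x)$. The star of $x\in G$ is $U(x)=\{y \in G : x \subset y\}$. *)

(* Defs.v *)
From mathcomp Require Import all_boot all_order all_algebra.
Set Implicit Arguments. Unset Strict Implicit. Unset Printing Implicit Defensive.
Import GRing.Theory Num.Theory.
Local Open Scope ring_scope.

Definition is_complex (T : finType) (G : {set {set T}}) : Prop :=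
  (forall x, x \in G -> x != set0) /\
  (forall x y : {set T}, x \in G -> y \subset x -> y != set0 -> y \in G).

(* dim x = |x| - 1, w(x) = (-1)^dim x *)
Definition w (T : finType) (x : {set T}) : int := (-1) ^+ (#|x|.-1).

Definition wS (T : finType) (A : {set {set T}}) : int := \sum_(x in A) w x.

Definition star (T : finType) (G : {set {set T}}) (x : {set T}) : {set {set T}} :=
  [set y in G | x \subset y].

(* Main.v *)
Require Import Defs.
From mathcomp Require Import all_boot all_order all_algebra.
Import GRing.Theory Num.Theory.
Local Open Scope ring_scope.

Definition tog (T : finType) (a : T) (x : {set T}) : {set T} :=
  if a \in x then x :\ a else a |: x.

Arguments tog {T}.

Lemma tog_inv (T : finType) (a : T) : involutive (tog a).
Proof.
move=> x; rewrite /tog; case: (boolP (a \in x)) => ax.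
  rewrite !inE eqxx /= setD1K //.
rewrite !inE eqxx /= setU1K //.
Qed.

Lemma sgn_tog (T : finType) (a : T) (x : {set T}) :
  (-1) ^+ #|tog a x| = - ((-1) ^+ #|x| : int).
Proof.
rewrite /tog; case: (boolP (a \in x)) => ax.
  by rewrite [in RHS](cardsD1 a x) ax exprD expr1 mulN1r opprK.
by rewrite cardsU1 ax exprD expr1 mulN1r.
Qed.

Lemma alt_sum (T : finType) (y : {set T}) :
  y != set0 -> \sum_(x : {set T} | x \subset y) ((-1) ^+ #|x| : int) = 0.
Proof.
case/set0Pn => a ay.
set S := (\sum_(x | _) _).
have H : S = - S.
  rewrite {1}/S (reindex_inj (inv_inj (tog_inv T a))) /=.
  rewrite /S -sumrN; apply: eq_big => x.
    rewrite /tog; case: (boolP (a \in x)) => ax.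
      apply/idP/idP => h.
        by rewrite -(setD1K ax) subUset sub1set ay h.
      apply: (subset_trans _ h); exact: subD1set.
    by rewrite subUset sub1set ay.
  by move=> _; rewrite (sgn_tog T).
have : 2 * S = 0 by rewrite mulr2n mulrDl mul1r {2}H subrr.
by move/eqP; rewrite mulf_eq0 => /orP [//|/eqP].
Qed.

Lemma sum_faces (T : finType) (G : {set {set T}}) (y : {set T}) :
  is_complex G -> y \in G -> \sum_(x in G | x \subset y) w x = 1.
Proof.
case=> ne cl yG.
have E : \sum_(x in G | x \subset y) w x = \sum_(x : {set T} | (x \subset y) && (x != set0)) w x.
  apply: eq_bigl => x; apply/andP/andP => [[xG xy]|[xy xn]]; first by split => //; exact: ne.
  by split => //; exact: cl yG xy xn.
rewrite E.
have := alt_sum T y (ne _ yG).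
rewrite (bigD1 set0) ?sub0set //= cards0 expr0 => /eqP.
rewrite addrC addr_eq0 => /eqP H.
have -> : 1 = - (-1 : int) by [].
rewrite -H -sumrN; apply: eq_bigr => x /andP [_ xn].
have : (0 < #|x|)%N by rewrite card_gt0.
rewrite /w; case: #|x| => [//|n] _ /=.
by rewrite exprS mulN1r opprK.
Qed.

Theorem mainTheorem1 (T : finType) (G : {set {set T}}) :
  is_complex G ->
  \sum_(x in G) w x * wS (star G x) = wS G.
Proof.
move=> cG.
under eq_bigr => x _ do rewrite /wS big_distrr /=.
rewrite (exchange_big_dep (fun y : {set T} => y \in G)) /=; last first.
  by move=> x y _; rewrite inE => /andP [].
rewrite /wS; apply: eq_bigr => y yG.
rewrite -[RHS](mulr1 (w y)) -(sum_faces T G y cG yG) big_distrr /=.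
apply: eq_big => [x|x _]; last by rewrite mulrC.
by rewrite inE yG.
Qed.
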